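(* Let $n\ge 2$ be an integer, let $\lambda_n:=2^n/(2^n-1)$, and consider $\mathbb{R}^{2n+1}$ with points written as $(x_1,x_2,x_3,y_1,\dots,y_{n-1},z_1,\dots,z_{n-1})$. Let $$K_n:=\Big\{(x_1,x_2,x_3,y_1,\dots,y_{n-1},z_1,\dots,z_{n-1})\;\Big|\; x_3^2\ge y_1^2+z_1^2,\ x_3\ge 0,\ x_3y_i\ge y_{i+1}^2\ (i=1,\dots,n-2),\ x_3y_{n-1}\ge x_1^2,\ x_3z_i\ge z_{i+1}^2\ (i=1,\dots,n-2),\ x_3z_{n-1}\ge x_2^2\Big\},$$ a closed convex cone, and let $K_n^\circ$ be its polar cone. Let $u_1,u_2\ge 0$ be such that $v:=(u_1,u_2,-1,0,\dots,0)$ lies in the boundary of $K_n^\circ$. Then $$N_{K_n^\circ}(v)=\mathrm{cone}(w)=\{\alpha w:\alpha\ge 0\},$$ where $w:=\big(u_1^{\lambda_n/2^n},\,u_2^{\lambda_n/2^n},\,1,\,u_1^{\lambda_n/2^1},\dots,u_1^{\lambda_n/2^{n-1}},\,u_2^{\lambda_n/2^1},\dots,u_2^{\lambda_n/2^{n-1}}\big)$.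
   Context: $\mathbb{R}^{2n+1}$ carries the standard Euclidean inner product. The polar cone of a cone $C$ is $C^\circ=\{v:\langle v,z\rangle\le 0\ \forall z\in C\}$. For a closed convex set $C$ and $\bar z\in C$, the normal cone is $N_C(\bar z)=\{v:\langle v,z-\bar z\rangle\le 0\ \forall z\in C\}$. *)

(* Defs.v *)
(* Points of R^(2n+1) are row vectors 'rV[R]_(2n+1)
   with the (product = Euclidean) topology of mathcomp-analysis. *)
From HB Require Import structures.
From mathcomp Require Import all_boot all_order all_algebra.
From mathcomp Require Import all_classical all_reals all_analysis.
Set Implicit Arguments. Unset Strict Implicit. Unset Printing Implicit Defensive.
Import Order.TTheory GRing.Theory Num.Theory.
Import numFieldNormedType.Exports.
Local Open Scope classical_set_scope.
Local Open Scope ring_scope.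

Section Defs.
Variable R : realType.

Definition dotv (k : nat) (u v : 'rV[R]_k) : R := \sum_(i < k) u 0 i * v 0 i.

Definition polar_cone (k : nat) (C : set 'rV[R]_k) : set 'rV[R]_k :=
  [set v | forall z, C z -> dotv v z <= 0].

Definition normal_cone (k : nat) (C : set 'rV[R]_k) (zb : 'rV[R]_k) : set 'rV[R]_k :=
  [set v | forall z, C z -> dotv v (z - zb) <= 0].

Definition boundary (k : nat) (A : set 'rV[R]_k) : set 'rV[R]_k :=
  closure A `\` interior A.

(* coordinates: index 0,1,2 = x1,x2,x3 ; 2+i = y_i (1<=i<=n-1) ;
   n+1+i = z_i (1<=i<=n-1) *)
Definition cX1 n (p : 'rV[R]_(2*n).+1) : R := p 0 (inord 0).
Definition cX2 n (p : 'rV[R]_(2*n).+1) : R := p 0 (inord 1).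
Definition cX3 n (p : 'rV[R]_(2*n).+1) : R := p 0 (inord 2).
Definition cY n (p : 'rV[R]_(2*n).+1) (i : nat) : R := p 0 (inord (2 + i)).
Definition cZ n (p : 'rV[R]_(2*n).+1) (i : nat) : R := p 0 (inord (n + 1 + i)).

Definition Kn (n : nat) : set 'rV[R]_(2*n).+1 :=
  [set p | cX3 p ^+ 2 >= cY p 1 ^+ 2 + cZ p 1 ^+ 2
         /\ cX3 p >= 0
         /\ (forall i, (1 <= i <= n - 2)%N -> cX3 p * cY p i >= cY p i.+1 ^+ 2)
         /\ cX3 p * cY p (n - 1) >= cX1 p ^+ 2
         /\ (forall i, (1 <= i <= n - 2)%N -> cX3 p * cZ p i >= cZ p i.+1 ^+ 2)
         /\ cX3 p * cZ p (n - 1) >= cX2 p ^+ 2].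

Definition lambda_n (n : nat) : R := 2 ^+ n / (2 ^+ n - 1).

Definition vvec (n : nat) (u1 u2 : R) : 'rV[R]_(2*n).+1 :=
  \row_(j < (2*n).+1)
    if (j == 0%N :> nat) then u1
    else if (j == 1%N :> nat) then u2
    else if (j == 2%N :> nat) then -1 else 0.

Definition wvec (n : nat) (u1 u2 : R) : 'rV[R]_(2*n).+1 :=
  \row_(j < (2*n).+1)
    if (j == 0%N :> nat) then u1 `^ (lambda_n n / 2 ^+ n)
    else if (j == 1%N :> nat) then u2 `^ (lambda_n n / 2 ^+ n)
    else if (j == 2%N :> nat) then 1
    else if (j <= n + 1)%N then u1 `^ (lambda_n n / 2 ^+ (j - 2))
    else u2 `^ (lambda_n n / 2 ^+ (j - n - 1)).

End Defs.

(* Main.v *)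
Require Import Defs.
From HB Require Import structures.
From mathcomp Require Import all_boot all_order all_algebra.
From mathcomp Require Import all_classical all_reals all_analysis.
From mathcomp Require Import ring lra zify.
From Stdlib Require Import Lia.
Import Order.TTheory GRing.Theory Num.Theory.
Import numFieldNormedType.Exports.
Local Open Scope classical_set_scope.
Local Open Scope ring_scope.
Set Implicit Arguments. Unset Strict Implicit. Unset Printing Implicit Defensive.
Section C.
Variable R : realType.

Lemma tangent (x a c c' : R) : 0 < x -> c ^+ 2 <= x * c' ->
  2 * a * c <= a ^+ 2 * x + c' /\ (2 * a * c = a ^+ 2 * x + c' -> c = a * x /\ c' = a ^+ 2 * x).
Proof.
move=> hx hc.
have key : x * (a ^+ 2 * x + c' - 2 * a * c) = (a * x - c) ^+ 2 + (x * c' - c ^+ 2) by ring.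
have h1 : 0 <= (a * x - c) ^+ 2 := sqr_ge0 _.
have h2 : 0 <= a ^+ 2 * x + c' - 2 * a * c.
  by rewrite -(pmulr_rge0 _ hx) key; lra.
split; first lra.
move=> heq.
have h0 : (a * x - c) ^+ 2 + (x * c' - c ^+ 2) = 0.
  by rewrite -key (_ : a ^+ 2 * x + c' - 2 * a * c = 0) ?mulr0 //; lra.
have e1 : (a * x - c) ^+ 2 = 0 by lra.
have e2 : x * c' = c ^+ 2 by lra.
move/eqP: e1; rewrite sqrf_eq0 subr_eq0 => /eqP e1.
split; first by rewrite e1.
apply: (mulfI (lt0r_neq0 hx)); rewrite e2 -e1; ring.
Qed.

Lemma chain (m : nat) (c : nat -> R) (x t : R) : 0 < x -> 0 <= t ->
  (forall j, (j < m)%N -> c j.+1 ^+ 2 <= x * c j) ->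
  forall k, (k <= m)%N ->
  2 ^+ k * t ^+ (2 ^ k).-1 * c m <= (2 ^+ k - 1) * t ^+ (2 ^ k) * x + c (m - k)%N /\
  ((0 < k)%N -> 0 < t -> 2 ^+ k * t ^+ (2 ^ k).-1 * c m = (2 ^+ k - 1) * t ^+ (2 ^ k) * x + c (m - k)%N ->
   forall j, (m - k <= j <= m)%N -> c j = t ^+ (2 ^ (m - j)) * x).
Proof.
move=> hx ht hc; elim=> [|k IH] hk.
  rewrite expn0 /= subn0 !expr0 !mul1r subrr !mul0r add0r; split=> //.
have hk' : (k <= m)%N by lia.
have [IH1 IH2] := IH hk'.
set A := t ^+ (2 ^ k).
have hA0 : 0 <= A by rewrite exprn_ge0.
have hA2 : t ^+ (2 ^ k.+1) = A ^+ 2 by rewrite expnSr exprM.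
have hA1 : t ^+ (2 ^ k.+1).-1 = A * t ^+ (2 ^ k).-1.
  have e : ((2 ^ k.+1).-1 = 2 ^ k + (2 ^ k).-1)%N.
    by rewrite expnS; have := expn_gt0 2 k; lia.
  by rewrite e exprD.
have hidx : (m - k = (m - k.+1).+1)%N by lia.
have hcj := hc (m - k.+1)%N ltac:(lia); rewrite -hidx in hcj.
have [T1 T2] := tangent A hx hcj.
rewrite hA2 hA1 exprS.
set L := 2 ^+ k * t ^+ (2 ^ k).-1 * c m.
have eL : 2 * 2 ^+ k * (A * t ^+ (2 ^ k).-1) * c m = 2 * A * L by rewrite /L; ring.
rewrite eL.
have h1 : 2 * A * L <= 2 * A * ((2 ^+ k - 1) * A * x + c (m - k)%N).
  by apply: ler_wpM2l => //; rewrite mulr_ge0 //; lra.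
split.
  set P := 2 ^+ k; move: h1 T1; rewrite -/P; nra.
move=> _ htp heq.
have hAp : 0 < A by rewrite exprn_gt0.
have e2 : 2 * A * c (m - k)%N = A ^+ 2 * x + c (m - k.+1)%N.
  move: h1 T1 heq; set P := 2 ^+ k; nra.
have eq1 : L = (2 ^+ k - 1) * A * x + c (m - k)%N.
  move: h1 T1 heq e2; set P := 2 ^+ k; nra.
have [e3 e4] := T2 e2.
move=> j hj.
case: (ltngtP j (m - k)%N) => [hlt|hgt|->].
- have -> : j = (m - k.+1)%N by lia.
  rewrite e4 -hA2; congr (t ^+ (2 ^ _) * x); lia.
- by apply: IH2 => //; lia.
- by rewrite e3; congr (t ^+ (2 ^ _) * x); lia.
Qed.

Lemma chain_full (m : nat) (c : nat -> R) (x t : R) : (0 < m)%N -> 0 < x -> 0 <= t ->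
  (forall j, (j < m)%N -> c j.+1 ^+ 2 <= x * c j) ->
  2 ^+ m * t ^+ (2 ^ m).-1 * c m = (2 ^+ m - 1) * t ^+ (2 ^ m) * x + c 0%N ->
  forall j, (1 <= j <= m)%N -> c j = t ^+ (2 ^ (m - j)) * x.
Proof.
move=> hm hx ht hc heq j hj.
case: (eqVneq t 0) => [t0|tn0].
  have hp : (0 < (2 ^ m).-1)%N.
    have : (2 ^ 1 <= 2 ^ m)%N by rewrite leq_exp2l.
    rewrite expn1; lia.
  move: heq; rewrite t0 expr0n /= (_ : ((2 ^ m).-1 == 0%N) = false); last lia.
  rewrite expr0n /= (_ : (2 ^ m == 0)%N = false); last by rewrite expn_eq0.
  rewrite !mulr0 ?mul0r ?add0r ?mulr0 ?add0r => c00.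
  have hpos : (0 < 2 ^ (m - j))%N by rewrite expn_gt0.
  rewrite expr0n (_ : (2 ^ (m - j) == 0)%N = false); last by rewrite expn_eq0.
  rewrite mul0r.
  clear hpos; move: j hj; elim => [|j IH] hj; first lia.
  have := hc j ltac:(lia).
  have -> : c j = 0.
    case: (j) IH hj => [|j'] IH' hj'; first by rewrite -c00.
    by apply: IH'; lia.
  rewrite mulr0 => h; apply/eqP; rewrite -sqrf_eq0 eq_le h sqr_ge0 //.
have htp : 0 < t by rewrite lt_def tn0 ht.
have [_ H] := chain hx ht hc (leqnn m).
by apply: H; rewrite ?subnn //; lia.
Qed.
End C.

Set Implicit Arguments. Unset Strict Implicit. Unset Printing Implicit Defensive.
Section S.
Variable R : realType.

Lemma dotvC k (a b : 'rV[R]_k) : dotv a b = dotv b a.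
Proof. by apply: eq_bigr => i _; rewrite mulrC. Qed.
Lemma dotvDr k (a b c : 'rV[R]_k) : dotv a (b + c) = dotv a b + dotv a c.
Proof. by rewrite /dotv -big_split; apply: eq_bigr => i _; rewrite mxE mulrDr. Qed.
Lemma dotvNr k (a b : 'rV[R]_k) : dotv a (- b) = - dotv a b.
Proof. by rewrite /dotv -sumrN; apply: eq_bigr => i _; rewrite mxE mulrN. Qed.
Lemma dotvBr k (a b c : 'rV[R]_k) : dotv a (b - c) = dotv a b - dotv a c.
Proof. by rewrite dotvDr dotvNr. Qed.
Lemma dotvZr k (a b : 'rV[R]_k) r : dotv a (r *: b) = r * dotv a b.
Proof. by rewrite /dotv mulr_sumr; apply: eq_bigr => i _; rewrite mxE mulrCA. Qed.
Lemma dotvDl k (a b c : 'rV[R]_k) : dotv (b + c) a = dotv b a + dotv c a.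
Proof. by rewrite dotvC dotvDr !(dotvC a). Qed.
Lemma dotvNl k (a b : 'rV[R]_k) : dotv (- b) a = - dotv b a.
Proof. by rewrite dotvC dotvNr dotvC. Qed.
Lemma dotvBl k (a b c : 'rV[R]_k) : dotv (b - c) a = dotv b a - dotv c a.
Proof. by rewrite dotvDl dotvNl. Qed.
Lemma dotvZl k (a b : 'rV[R]_k) r : dotv (r *: b) a = r * dotv b a.
Proof. by rewrite dotvC dotvZr dotvC. Qed.
Lemma dotv0l k (a : 'rV[R]_k) : dotv 0 a = 0.
Proof. by rewrite /dotv big1 // => i _; rewrite mxE mul0r. Qed.

Definition E k (i : nat) : 'rV[R]_k.+1 := delta_mx 0 (inord i).
Lemma dotvE k i (p : 'rV[R]_k.+1) : dotv (E k i) p = p 0 (inord i).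
Proof.
rewrite /dotv (bigD1 (inord i)) //= big1 ?addr0.
  by rewrite !mxE !eqxx mul1r.
by move=> j /negbTE hj; rewrite !mxE hj andbF mul0r.
Qed.

Lemma dot_abs k (a b : 'rV[R]_k) : `|dotv a b| <= \sum_(i < k) `|a 0 i| * `|b 0 i|.
Proof.
rewrite /dotv; apply: le_trans (ler_norm_sum _ _ _) _.
by apply: ler_sum => i _; rewrite normrM.
Qed.

Variable n : nat.
Hypothesis hn : (2 <= n)%N.
Local Notation V := ('rV[R]_(2*n).+1).

Lemma inord_eq (j : 'I_(2*n).+1) k : (k < (2*n).+1)%N -> (j == inord k) = (val j == k).
Proof. by move=> hk; rewrite -(inj_eq val_inj) /= inordK. Qed.

Lemma vvecE u1 u2 : vvec n u1 u2 = u1 *: E _ 0 + u2 *: E _ 1 - E _ 2.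
Proof.
apply/rowP => j; rewrite !mxE !eqxx /= !inord_eq; try lia.
case: j => [[|[|[|j]]] hj] /=; rewrite ?mulr1 ?mulr0; lra.
Qed.

Lemma dotv_v u1 u2 (p : V) : dotv (vvec n u1 u2) p = u1 * cX1 p + u2 * cX2 p - cX3 p.
Proof. by rewrite vvecE !dotvBl !dotvDl !dotvZl !dotvE. Qed.

Lemma coord_cases (j : 'I_(2*n).+1) : val j = 0%N \/ val j = 1%N \/ val j = 2%N \/
  (exists2 i, (1 <= i <= n - 1)%N & val j = (2 + i)%N) \/
  (exists2 i, (1 <= i <= n - 1)%N & val j = (n + 1 + i)%N).
Proof.
case: j => j hj /=.
case: (ltnP j 3) => h3.
  by case: j hj h3 => [|[|[|j]]]; auto.
right; right; right.
case: (leqP j (n+1)) => h.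
  by left; exists (j - 2)%N; lia.
by right; exists (j - n - 1)%N; lia.
Qed.

Definition Pv (t s : R) : V := \row_(j < (2*n).+1)
  if (j == 0%N :> nat) then t else if (j == 1%N :> nat) then s
  else if (j == 2%N :> nat) then 1
  else if (j <= n + 1)%N then t ^+ (2 ^ (n + 2 - j)) else s ^+ (2 ^ (2 * n + 1 - j)).

Lemma Pv1 t s : cX1 (Pv t s) = t.
Proof. by rewrite /cX1 mxE inordK //; lia. Qed.
Lemma Pv2 t s : cX2 (Pv t s) = s.
Proof. by rewrite /cX2 mxE inordK //; lia. Qed.
Lemma Pv3 t s : cX3 (Pv t s) = 1.
Proof. by rewrite /cX3 mxE inordK //; lia. Qed.
Lemma PvY t s i : (1 <= i <= n - 1)%N -> cY (Pv t s) i = t ^+ (2 ^ (n - i)).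
Proof.
move=> hi; rewrite /cY mxE inordK; last lia.
have -> : (2 + i == 0%N) = false by lia.
have -> : (2 + i == 1%N) = false by lia.
have -> : (2 + i == 2%N) = false by lia.
have -> : (2 + i <= n + 1)%N = true by lia.
by have -> : (n + 2 - (2 + i) = n - i)%N by lia.
Qed.
Lemma PvZ t s i : (1 <= i <= n - 1)%N -> cZ (Pv t s) i = s ^+ (2 ^ (n - i)).
Proof.
move=> hi; rewrite /cZ mxE inordK; last lia.
have -> : (n + 1 + i == 0%N) = false by lia.
have -> : (n + 1 + i == 1%N) = false by lia.
have -> : (n + 1 + i == 2%N) = false by lia.
have -> : (n + 1 + i <= n + 1)%N = false by lia.
by have -> : (2 * n + 1 - (n + 1 + i) = n - i)%N by lia.
Qed.

Lemma powR_chain (u : R) k : 0 <= u -> (k <= n)%N ->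
  u `^ (lambda_n R n / 2 ^+ k) = (u `^ (lambda_n R n / 2 ^+ n)) ^+ (2 ^ (n - k)).
Proof.
move=> hu hk; rewrite -powR_mulrn ?powR_ge0 // -powRrM; congr (_ `^ _).
rewrite natrX; have -> : (2:R) ^+ n = 2 ^+ (n - k) * 2 ^+ k by rewrite -exprD subnK.
field; apply/andP; split; apply: expf_neq0; lra.
Qed.

Lemma powR_base (u : R) : 0 <= u -> u = (u `^ (lambda_n R n / 2 ^+ n)) ^+ (2 ^ n).-1.
Proof.
move=> hu; rewrite -powR_mulrn ?powR_ge0 // -powRrM.
have h2 : (1 < 2 ^+ n :> R).
  by rewrite -natrX ltr1n -(expn0 2) ltn_exp2l //; lia.
have -> : (lambda_n R n / 2 ^+ n * ((2 ^ n).-1)%:R) = 1.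
  rewrite -subn1 natrB ?expn_gt0 // natrX /lambda_n. field. apply/andP; split; lra.
by rewrite powRr1.
Qed.

Lemma wvecE u1 u2 : 0 <= u1 -> 0 <= u2 ->
  wvec n u1 u2 = Pv (u1 `^ (lambda_n R n / 2 ^+ n)) (u2 `^ (lambda_n R n / 2 ^+ n)).
Proof.
move=> h1 h2; apply/rowP => j; rewrite !mxE.
case: (coord_cases j) => [->|[->|[->|[[i hi ->]|[i hi ->]]]]] //.
  have -> : (2 + i == 0%N) = false by lia.
  have -> : (2 + i == 1%N) = false by lia.
  have -> : (2 + i == 2%N) = false by lia.
  have -> : (2 + i <= n + 1)%N = true by lia.
  have -> : (2 + i - 2 = i)%N by lia.
  have -> : (n + 2 - (2 + i) = n - i)%N by lia.
  by apply: powR_chain => //; lia.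
have -> : (n + 1 + i == 0%N) = false by lia.
have -> : (n + 1 + i == 1%N) = false by lia.
have -> : (n + 1 + i == 2%N) = false by lia.
have -> : (n + 1 + i <= n + 1)%N = false by lia.
have -> : (n + 1 + i - n - 1 = i)%N by lia.
have -> : (2 * n + 1 - (n + 1 + i) = n - i)%N by lia.
by apply: powR_chain => //; lia.
Qed.

Lemma sq_le (x y c : R) : 0 <= x -> c ^+ 2 <= x * y -> `|y| <= x -> `|c| <= x.
Proof.
move=> hx hc hy; have hy' : y <= `|y| := ler_norm y.
have hc2 : `|c| ^+ 2 = c ^+ 2 by rewrite -normrX ger0_norm // sqr_ge0.
have := normr_ge0 c; nra.
Qed.

Lemma sqr_pow2 (x : R) k : (0 < k)%N -> (x ^+ (2 ^ (k - 1))) ^+ 2 = x ^+ (2 ^ k).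
Proof. by move=> hk; rewrite -exprM -expnSr; congr (_ ^+ (2 ^ _)); lia. Qed.

Section K.
Variable p : V.
Hypothesis hp : @Kn R n p.

Lemma KX3 : 0 <= cX3 p. Proof. by case: hp => _ []. Qed.

Lemma KY i : (1 <= i <= n - 1)%N -> `|cY p i| <= cX3 p.
Proof.
move: hp => [h1 [h2 [h3 [h4 [h5 h6]]]]].
elim: i => [|i IH] hi; first lia.
case: (eqVneq i 0%N) => [->|hi0].
  apply: (@sq_le _ (cX3 p)) => //; last by rewrite ger0_norm.
  have := sqr_ge0 (cZ p 1); nra.
apply: (@sq_le _ (cY p i)) => //; last by apply: IH; lia.
by apply: h3; lia.
Qed.

Lemma KZ i : (1 <= i <= n - 1)%N -> `|cZ p i| <= cX3 p.
Proof.
move: hp => [h1 [h2 [h3 [h4 [h5 h6]]]]].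
elim: i => [|i IH] hi; first lia.
case: (eqVneq i 0%N) => [->|hi0].
  apply: (@sq_le _ (cX3 p)) => //; last by rewrite ger0_norm.
  have := sqr_ge0 (cY p 1); nra.
apply: (@sq_le _ (cZ p i)) => //; last by apply: IH; lia.
by apply: h5; lia.
Qed.

Lemma KX1 : `|cX1 p| <= cX3 p.
Proof.
move: hp => [h1 [h2 [h3 [h4 [h5 h6]]]]].
by apply: (@sq_le _ (cY p (n - 1))) => //; apply: KY; lia.
Qed.

Lemma KX2 : `|cX2 p| <= cX3 p.
Proof.
move: hp => [h1 [h2 [h3 [h4 [h5 h6]]]]].
by apply: (@sq_le _ (cZ p (n - 1))) => //; apply: KZ; lia.
Qed.

Lemma Kcoord (j : 'I_(2*n).+1) : `|p 0 j| <= cX3 p.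
Proof.
have -> : j = inord (val j) by rewrite inord_val.
case: (coord_cases j) => [->|[->|[->|[[i hi ->]|[i hi ->]]]]].
- exact: KX1.
- exact: KX2.
- by rewrite ger0_norm; [exact: lexx| exact: KX3].
- exact: KY.
- exact: KZ.
Qed.

Lemma KY0 i : (1 <= i <= n - 1)%N -> 0 <= cY p i.
Proof.
move=> hi; move: (hp) => [h1 [h2 [h3 [h4 [h5 h6]]]]].
have hb := KY hi.
case: (eqVneq (cX3 p) 0) => [h0|h0].
  by move: hb; rewrite h0 normr_le0 => /eqP ->.
have hx : 0 < cX3 p by rewrite lt_def h0 h2.
case: (eqVneq i (n - 1)%N) => [->|hne].
  have := sqr_ge0 (cX1 p); nra.
have := h3 i ltac:(lia); have := sqr_ge0 (cY p i.+1); nra.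
Qed.

Lemma KZ0 i : (1 <= i <= n - 1)%N -> 0 <= cZ p i.
Proof.
move=> hi; move: (hp) => [h1 [h2 [h3 [h4 [h5 h6]]]]].
have hb := KZ hi.
case: (eqVneq (cX3 p) 0) => [h0|h0].
  by move: hb; rewrite h0 normr_le0 => /eqP ->.
have hx : 0 < cX3 p by rewrite lt_def h0 h2.
case: (eqVneq i (n - 1)%N) => [->|hne].
  have := sqr_ge0 (cX2 p); nra.
have := h5 i ltac:(lia); have := sqr_ge0 (cZ p i.+1); nra.
Qed.
End K.

Lemma Pv_K t s : 0 <= t -> 0 <= s -> t ^+ (2 ^ n) + s ^+ (2 ^ n) <= 1 -> @Kn R n (Pv t s).
Proof.
move=> ht hs hT; rewrite /Kn /=; rewrite !Pv3 !Pv1 !Pv2.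
rewrite !PvY ?PvZ; try lia.
rewrite !sqr_pow2; try lia.
have -> : (n - (n - 1) = 1)%N by lia.
rewrite expr1n mul1r; split=> //; split=> //.
split.
  move=> i hi; rewrite mul1r !PvY; try lia.
  have -> : (n - i.+1 = n - i - 1)%N by lia.
  by rewrite sqr_pow2 //; lia.
split; first by rewrite expn1.
split; last by rewrite expn1 mul1r.
move=> i hi; rewrite mul1r !PvZ; try lia.
have -> : (n - i.+1 = n - i - 1)%N by lia.
  by rewrite sqr_pow2 //; lia.
Qed.

Section Half.
Variables (f : nat -> R) (a x u tau : R).
Hypotheses (hx : 0 < x) (htau : 0 <= tau) (hu : u = tau ^+ (2 ^ n).-1).
Hypothesis hf : forall i, (1 <= i <= n - 2)%N -> f i.+1 ^+ 2 <= x * f i.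
Hypothesis ha : a ^+ 2 <= x * f (n - 1)%N.

Definition cs (j : nat) : R := if j == 0%N then f 1%N ^+ 2 / x else if (j < n)%N then f j else a.

Lemma cs_ok j : (j < n)%N -> cs j.+1 ^+ 2 <= x * cs j.
Proof.
move=> hj; rewrite /cs /=.
case: (eqVneq j 0%N) => [->|hj0].
  have -> : (1 < n)%N = true by lia.
  by rewrite mulrC divfK ?lt0r_neq0.
case: (ltnP j.+1 n) => h.
  have -> : (j < n)%N = true by lia.
  by apply: hf; lia.
have -> : (j < n)%N = true by lia.
by have -> : j = (n - 1)%N by lia.
Qed.

Lemma half_ineq : (2 ^+ n * (u * a) <= (2 ^+ n - 1) * tau ^+ (2 ^ n) * x + f 1%N ^+ 2 / x) /\
  (2 ^+ n * (u * a) = (2 ^+ n - 1) * tau ^+ (2 ^ n) * x + f 1%N ^+ 2 / x ->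
   a = tau * x /\ forall i, (1 <= i <= n - 1)%N -> f i = tau ^+ (2 ^ (n - i)) * x).
Proof.
have [H1 _] := chain hx htau cs_ok (leqnn n).
have ecn : cs n = a.
  rewrite /cs; have -> : (n == 0)%N = false by lia.
  by rewrite ltnn.
have ec0 : cs (n - n)%N = f 1%N ^+ 2 / x by rewrite subnn.
rewrite ecn ec0 in H1.
have eL : 2 ^+ n * (u * a) = 2 ^+ n * tau ^+ (2 ^ n).-1 * a by rewrite hu mulrA.
rewrite eL; split => // heq.
have hF := chain_full (_ : (0 < n)%N) hx htau cs_ok.
rewrite ecn in hF; have {}hF := hF ltac:(lia) heq.
split.
  by rewrite -ecn hF ?subnn ?expr1 //; lia.
move=> i hi; have := hF i ltac:(lia).
rewrite /cs; have -> : (i == 0)%N = false by lia.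
by have -> : (i < n)%N = true by lia.
Qed.
End Half.

Variables u1 u2 : R.
Hypotheses (hu1 : 0 <= u1) (hu2 : 0 <= u2).
Local Notation t := (u1 `^ (lambda_n R n / 2 ^+ n)).
Local Notation s := (u2 `^ (lambda_n R n / 2 ^+ n)).
Local Notation T := (t ^+ (2 ^ n) + s ^+ (2 ^ n)).

Lemma ht0 : 0 <= t. Proof. exact: powR_ge0. Qed.
Lemma hs0 : 0 <= s. Proof. exact: powR_ge0. Qed.

Lemma K_zero (p : V) : @Kn R n p -> cX3 p = 0 -> p = 0.
Proof.
move=> hp h0; apply/rowP => j; rewrite mxE.
by apply/eqP; rewrite -normr_le0 -h0 Kcoord.
Qed.

Lemma MI (p : V) : @Kn R n p ->
  2 ^+ n * (u1 * cX1 p + u2 * cX2 p) <= ((2 ^+ n - 1) * T + 1) * cX3 p.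
Proof.
move=> hp; have hx0 := KX3 hp.
case: (eqVneq (cX3 p) 0) => [h0|hn0].
  by rewrite (K_zero hp h0) /cX1 /cX2 /cX3 !mxE !mulr0 addr0 mulr0.
have hx : 0 < cX3 p by rewrite lt_def hn0 hx0.
move: (hp) => [h1 [h2 [h3 [h4 [h5 h6]]]]].
have [A1 _] := half_ineq hx ht0 (powR_base hu1) h3 h4.
have [A2 _] := half_ineq hx hs0 (powR_base hu2) h5 h6.
have hq : cY p 1 ^+ 2 / cX3 p + cZ p 1 ^+ 2 / cX3 p <= cX3 p.
  by rewrite -mulrDl ler_pdivrMr // -expr2.
move: A1 A2 hq; set a1 := cY p 1 ^+ 2 / cX3 p; set a2 := cZ p 1 ^+ 2 / cX3 p.
move=> A1 A2 hq.
have -> : ((2 ^+ n - 1) * T + 1) * cX3 p =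
  ((2 ^+ n - 1) * t ^+ (2 ^ n) * cX3 p + a1) + ((2 ^+ n - 1) * s ^+ (2 ^ n) * cX3 p + a2) + (cX3 p - a1 - a2) by ring.
rewrite mulrDr; lra.
Qed.

Lemma EQ (p : V) : T = 1 -> @Kn R n p -> u1 * cX1 p + u2 * cX2 p = cX3 p ->
  p = cX3 p *: Pv t s.
Proof.
move=> hT hp heq; have hx0 := KX3 hp.
case: (eqVneq (cX3 p) 0) => [h0|hn0].
  by rewrite h0 scale0r (K_zero hp h0).
have hx : 0 < cX3 p by rewrite lt_def hn0 hx0.
move: (hp) => [h1 [h2 [h3 [h4 [h5 h6]]]]].
have [A1 B1] := half_ineq hx ht0 (powR_base hu1) h3 h4.
have [A2 B2] := half_ineq hx hs0 (powR_base hu2) h5 h6.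
have hq : cY p 1 ^+ 2 / cX3 p + cZ p 1 ^+ 2 / cX3 p <= cX3 p.
  by rewrite -mulrDl ler_pdivrMr // -expr2.
move: A1 A2 hq B1 B2; set a1 := cY p 1 ^+ 2 / cX3 p; set a2 := cZ p 1 ^+ 2 / cX3 p.
move=> A1 A2 hq B1 B2.
have e : 2 ^+ n * (u1 * cX1 p) + 2 ^+ n * (u2 * cX2 p) = 2 ^+ n * cX3 p by rewrite -mulrDr heq.
have eT : (2 ^+ n - 1) * t ^+ (2 ^ n) * cX3 p + (2 ^+ n - 1) * s ^+ (2 ^ n) * cX3 p =
   (2 ^+ n - 1) * cX3 p.
  by transitivity ((2 ^+ n - 1) * T * cX3 p); [ring | rewrite hT mulr1].
have [E1 F1] := B1 ltac:(lra).
have [E2 F2] := B2 ltac:(lra).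
apply/rowP => j; rewrite mxE.
have -> : j = inord (val j) by rewrite inord_val.
case: (coord_cases j) => [->|[->|[->|[[i hi ->]|[i hi ->]]]]].
- by rewrite -[p 0 _]/(cX1 p) -[Pv _ _ 0 _]/(cX1 (Pv _ _)) Pv1 E1 mulrC.
- by rewrite -[p 0 _]/(cX2 p) -[Pv _ _ 0 _]/(cX2 (Pv _ _)) Pv2 E2 mulrC.
- by rewrite -[p 0 _]/(cX3 p) -[Pv _ _ 0 _]/(cX3 (Pv _ _)) Pv3 mulr1.
- by rewrite -[p 0 _]/(cY p i) -[Pv _ _ 0 _]/(cY (Pv _ _) i) PvY // F1 // mulrC.
- by rewrite -[p 0 _]/(cZ p i) -[Pv _ _ 0 _]/(cZ (Pv _ _) i) PvZ // F2 // mulrC.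
Qed.


Lemma rot_test (x y c A : R) : 0 <= x -> 0 <= y -> c ^+ 2 <= x * y -> 2 * A * c - A ^+ 2 * x - y <= 0.
Proof.
move=> hx hy hc; case: (eqVneq x 0) => [x0|xn0].
  move: hc; rewrite x0 mul0r => hc.
  have c0 : c = 0 by apply/eqP; rewrite -sqrf_eq0 eq_le hc sqr_ge0.
  rewrite c0 mulr0 mulr0; lra.
have hx' : 0 < x by rewrite lt_def xn0 hx.
have [H _] := tangent A hx' hc; lra.
Qed.

Lemma rot_back (x y c : R) : 0 <= x -> (forall A, 2 * A * c - A ^+ 2 * x - y <= 0) -> c ^+ 2 <= x * y.
Proof.
move=> hx H; case: (eqVneq x 0) => [x0|xn0].
  have hy := H 0; rewrite x0 in H hy *; rewrite mul0r.
  case: (eqVneq c 0) => [->|cn0]; first by rewrite expr0n.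
  have := H ((`|y| + 1) / (2 * c)).
  have -> : 2 * ((`|y| + 1) / (2 * c)) * c = `|y| + 1.
    by field.
  rewrite mulr0 subr0; have := ler_norm y; lra.
have hx' : 0 < x by rewrite lt_def xn0 hx.
have := H (c / x).
have -> : 2 * (c / x) * c - (c / x) ^+ 2 * x - y = (c ^+ 2 - x * y) / x.
  by field.
by rewrite pmulr_lle0 ?invr_gt0 // subr_le0.
Qed.

Lemma soc_test (x y z a b : R) : 0 <= x -> y ^+ 2 + z ^+ 2 <= x ^+ 2 -> a ^+ 2 + b ^+ 2 <= 1 ->
  a * y + b * z - x <= 0.
Proof.
move=> hx h1 h2.
have cs : (a * y + b * z) ^+ 2 <= (a ^+ 2 + b ^+ 2) * (y ^+ 2 + z ^+ 2).
  have := sqr_ge0 (a * z - b * y); nra.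
have : (a * y + b * z) ^+ 2 <= x ^+ 2.
  apply: le_trans cs _; have := sqr_ge0 y; have := sqr_ge0 z; nra.
nra.
Qed.

Lemma soc_back (x y z : R) : 0 <= x -> (forall a b, a ^+ 2 + b ^+ 2 <= 1 -> a * y + b * z - x <= 0) ->
  y ^+ 2 + z ^+ 2 <= x ^+ 2.
Proof.
move=> hx H.
have hQ : 0 <= y ^+ 2 + z ^+ 2 by rewrite addr_ge0 ?sqr_ge0.
set r := Num.sqrt (y ^+ 2 + z ^+ 2).
have hr2 : r ^+ 2 = y ^+ 2 + z ^+ 2 by rewrite sqr_sqrtr.
have hr0 : 0 <= r by rewrite sqrtr_ge0.
case: (eqVneq r 0) => [r0|rn0].
  by rewrite -hr2 r0 expr0n /= sqr_ge0.
have hr : 0 < r by rewrite lt_def rn0 hr0.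
have := H (y / r) (z / r).
have -> : (y / r) ^+ 2 + (z / r) ^+ 2 = 1.
  by rewrite !expr_div_n -mulrDl -hr2 divff // expf_neq0.
have -> : y / r * y + z / r * z = r.
  by rewrite mulrAC [z / r * z]mulrAC -mulrDl -!expr2 -hr2 expr2 mulrK // unitfE.
move=> /(_ (lexx _)) h; rewrite -hr2; nra.
Qed.

Definition G (A : R) (ic iy : nat) : V := (2 * A) *: E (2 * n) ic - A ^+ 2 *: E _ 2 - E _ iy.

Lemma dotG A ic iy (p : V) : dotv (G A ic iy) p = 2 * A * p 0 (inord ic) - A ^+ 2 * cX3 p - p 0 (inord iy).
Proof. by rewrite /G !dotvBl !dotvZl !dotvE. Qed.

Lemma G_polar A ic iy : (forall p : V, @Kn R n p -> 0 <= p 0 (inord iy) /\ p 0 (inord ic) ^+ 2 <= cX3 p * p 0 (inord iy)) ->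
  polar_cone (@Kn R n) (G A ic iy).
Proof.
move=> H p hp; rewrite dotG; have [h1 h2] := H p hp.
by apply: rot_test => //; apply: KX3.
Qed.

Definition Gs (a b : R) : V := a *: E (2 * n) (2 + 1) + b *: E _ (n + 1 + 1) - E _ 2.

Lemma dotGs a b (p : V) : dotv (Gs a b) p = a * cY p 1 + b * cZ p 1 - cX3 p.
Proof. by rewrite /Gs !dotvBl !dotvDl !dotvZl !dotvE. Qed.

Lemma Gs_polar a b : a ^+ 2 + b ^+ 2 <= 1 -> polar_cone (@Kn R n) (Gs a b).
Proof.
move=> hab p hp; rewrite dotGs; apply: soc_test => //; first exact: KX3.
by case: hp.
Qed.

Lemma G3_polar : polar_cone (@Kn R n) (- E _ 2).
Proof. by move=> p hp; rewrite dotvNl dotvE oppr_le0; apply: KX3. Qed.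

Lemma bipolar (q : V) : (forall g, polar_cone (@Kn R n) g -> dotv g q <= 0) -> @Kn R n q.
Proof.
move=> H.
have hx : 0 <= cX3 q.
  by have := H _ G3_polar; rewrite dotvNl dotvE oppr_le0.
have rot : forall ic iy, (forall p : V, @Kn R n p -> 0 <= p 0 (inord iy) /\ p 0 (inord ic) ^+ 2 <= cX3 p * p 0 (inord iy)) ->
    q 0 (inord ic) ^+ 2 <= cX3 q * q 0 (inord iy).
  move=> ic iy hK; apply: rot_back => // A.
  by rewrite -dotG; apply: H; apply: G_polar.
split.
  apply: soc_back => // a b hab; rewrite -dotGs; exact: H _ (Gs_polar hab).
split => //.
split.
  move=> i hi; apply: (rot (2 + i.+1)%N (2 + i)%N) => p hp; split.
    by apply: KY0 => //; lia.
  by case: hp => [_ [_ [h3 _]]]; apply: h3.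
split.
  apply: (rot 0%N (2 + (n - 1))%N) => p hp; split.
    by apply: KY0 => //; lia.
  by case: hp => [_ [_ [_ [h4 _]]]].
split.
  move=> i hi; apply: (rot (n + 1 + i.+1)%N (n + 1 + i)%N) => p hp; split.
    by apply: KZ0 => //; lia.
  by case: hp => [_ [_ [_ [_ [h5 _]]]]]; apply: h5.
apply: (rot 1%N (n + 1 + (n - 1))%N) => p hp; split.
  by apply: KZ0 => //; lia.
by case: hp => [_ [_ [_ [_ [_ h6]]]]].
Qed.


Lemma closureP (A : set V) (v : V) : closure A v -> forall e, 0 < e ->
  exists v' : V, A v' /\ forall j, `|v 0 j - v' 0 j| < e.
Proof.
move=> hcl e he; have [v' [Av' bv']] := hcl _ (nbhsx_ballx v e he).
exists v'; split => // j; move: bv' => [_ H]; exact: H 0 j.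
Qed.

Lemma interiorP (A : set V) (v : V) e : 0 < e ->
  (forall v' : V, (forall j, `|v 0 j - v' 0 j| < e) -> A v') -> interior A v.
Proof.
move=> he H; rewrite /interior; apply/nbhs_ballP; exists e => // v' hb.
by apply: H => j; move: hb => [_ H']; exact: H' 0 j.
Qed.

Lemma dot_bound (a b : V) e : (forall j, `|a 0 j| <= e) ->
  `|dotv a b| <= e * \sum_(j < (2*n).+1) `|b 0 j|.
Proof.
move=> H; apply: le_trans (dot_abs a b) _; rewrite mulr_sumr.
by apply: ler_sum => j _; apply: ler_wpM2r => //.
Qed.

Lemma sum_K (p : V) : @Kn R n p -> \sum_(j < (2*n).+1) `|p 0 j| <= (2*n).+1%:R * cX3 p.
Proof.
move=> hp; apply: le_trans (_ : \sum_(j < (2*n).+1) cX3 p <= _).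
  by apply: ler_sum => j _; apply: Kcoord.
by rewrite sumr_const card_ord mulr_natl.
Qed.

Lemma polarD (g h : V) : polar_cone (@Kn R n) g -> polar_cone (@Kn R n) h -> polar_cone (@Kn R n) (g + h).
Proof. by move=> hg hh p hp; rewrite dotvDl; have := hg p hp; have := hh p hp; lra. Qed.

Lemma u1t : u1 * t = t ^+ (2 ^ n).
Proof.
rewrite {1}(powR_base hu1) -exprSr prednK // expn_gt0 //.
Qed.
Lemma u2s : u2 * s = s ^+ (2 ^ n).
Proof.
rewrite {1}(powR_base hu2) -exprSr prednK // expn_gt0 //.
Qed.

Lemma main (hv : boundary (polar_cone (@Kn R n)) (vvec n u1 u2)) :
  normal_cone (polar_cone (@Kn R n)) (vvec n u1 u2) =
  [set a *: wvec n u1 u2 | a in [set a : R | 0 <= a]].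
Proof.
set P := polar_cone (@Kn R n).
set v := vvec n u1 u2.
have [hcl hint] := hv.
have h2n : 1 < 2 ^+ n :> R.
  by rewrite -natrX ltr1n -(expn0 2) ltn_exp2l //; lia.
have hT0 : 0 <= T by rewrite addr_ge0 // exprn_ge0 // ?ht0 ?hs0.
have hT1 : T <= 1.
  rewrite leNgt; apply/negP => hT.
  have [rho hrho] : {rho : R | rho = 2 / (1 + T)} by eexists.
  have hr0 : 0 <= rho by rewrite hrho divr_ge0 //; lra.
  have hr1 : rho <= 1 by rewrite hrho ler_pdivrMr; lra.
  have hrN : rho ^+ (2 ^ n) <= rho ^+ 2.
    have e : (2 ^ n = 2 + (2 ^ n - 2))%N.
      have : (2 ^ 1 <= 2 ^ n)%N by rewrite leq_exp2l //; lia.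
      rewrite expn1; lia.
    rewrite e exprD; rewrite -{2}(mulr1 (rho ^+ 2)); apply: ler_wpM2l; first exact: exprn_ge0.
    exact: exprn_ile1.
  have hK : @Kn R n (Pv (rho * t) (rho * s)).
    apply: Pv_K; [exact: mulr_ge0 hr0 ht0 | exact: mulr_ge0 hr0 hs0 |].
    rewrite !exprMn -mulrDr.
    apply: (le_trans (ler_wpM2r hT0 hrN)).
    rewrite hrho expr_div_n mulrAC ler_pdivrMr; last by rewrite exprn_gt0 //; lra.
    have := sqr_ge0 (T - 1); lra.
  set p0 := Pv (rho * t) (rho * s).
  have hdot : dotv v p0 = (T - 1) / (1 + T).
    rewrite dotv_v /p0 Pv1 Pv2 Pv3 mulrCA [u2 * _]mulrCA u1t u2s.
    by rewrite hrho; field; lra.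
  have hd : 0 < (T - 1) / (1 + T) by rewrite divr_gt0; lra.
  set M := \sum_(j < (2*n).+1) `|p0 0 j|.
  have hM : 0 <= M by rewrite sumr_ge0 // => j _.
  have he : 0 < (T - 1) / (1 + T) / (M + 1) by rewrite divr_gt0 //; lra.
  have [v' [hv' hb]] := closureP hcl he.
  have h1 := hv' p0 hK.
  have h2 := @dot_bound (v - v') p0 ((T - 1) / (1 + T) / (M + 1)).
  have {h2} h2 : `|dotv (v - v') p0| <= (T - 1) / (1 + T) / (M + 1) * M.
    apply: h2 => j; have -> : (v - v') 0 j = v 0 j - v' 0 j by rewrite !mxE.
    exact: ltW (hb j).
  have h3 : (T - 1) / (1 + T) / (M + 1) * M < (T - 1) / (1 + T).
    rewrite mulrAC ltr_pdivrMr; last lra.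
    by rewrite ltr_pM2l //; lra.
  move: h2; rewrite dotvBl hdot => h2.
  have := ler_norm (dotv v p0 - dotv v' p0); rewrite hdot; lra.
have hT : T = 1.
  apply/eqP; rewrite eq_le hT1 /=; rewrite leNgt; apply/negP => hT.
  apply: hint.
  pose c := (2 ^+ n - 1) * (1 - T) / (2 ^+ n * (2*n).+1%:R).
  have hc : 0 < c by rewrite /c !divr_gt0 ?mulr_gt0 //; lra.
  apply: (@interiorP _ _ c hc) => v' hb p hp.
  have hx := KX3 hp.
  have h1 := MI hp.
  have h2 : `|dotv (v - v') p| <= c * ((2*n).+1%:R * cX3 p).
    apply: le_trans (dot_bound _ (e := c) _) _.
      move=> j; have -> : (v - v') 0 j = v 0 j - v' 0 j by rewrite !mxE.
      exact: ltW (hb j).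
    by apply: ler_wpM2l; [exact: ltW | exact: sum_K].
  have e : c * ((2*n).+1%:R * cX3 p) = (2 ^+ n - 1) * (1 - T) / 2 ^+ n * cX3 p.
    by rewrite /c; field; have := ler0n R n => h0; apply/andP; split; lra.
  rewrite e in h2.
  have hv0 : dotv v p <= - ((2 ^+ n - 1) * (1 - T) / 2 ^+ n * cX3 p).
    rewrite dotv_v.
    have e2 : - ((2 ^+ n - 1) * (1 - T) / 2 ^+ n * cX3 p) = (((2 ^+ n - 1) * T + 1) * cX3 p) / 2 ^+ n - cX3 p.
      by field; lra.
    rewrite e2 lerD2r ler_pdivlMr; last lra.
    by rewrite mulrC.
  move: h2; rewrite dotvBl => h2.
  have hn1 : dotv v' p - dotv v p <= `|dotv v p - dotv v' p| by rewrite distrC ler_norm.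
  lra.
have hvP : P v.
  move=> p hp; rewrite dotv_v; have := MI hp; rewrite hT mulr1 subrK.
  have := KX3 hp; move=> hx h; rewrite subr_le0.
  by rewrite -(ler_pM2l (_ : 0 < 2 ^+ n)) //; lra.
have hwK : @Kn R n (Pv t s) by apply: Pv_K; rewrite ?ht0 ?hs0 ?hT.
have hvw : dotv v (Pv t s) = 0.
  by rewrite dotv_v Pv1 Pv2 Pv3 u1t u2s hT subrr.
rewrite (wvecE hu1 hu2).
apply/seteqP; split => q.
  move=> hq.
  have hg : forall g, P g -> dotv g q <= 0.
    move=> g hg; have := hq (g + v) (polarD hg hvP).
    by rewrite dotvC addrK.
  have hqK := bipolar hg.
  have hq0 : P 0 by move=> p _; rewrite dotv0l.
  have e1 : 0 <= dotv v q.
    by have := hq 0 hq0; rewrite sub0r dotvNr dotvC oppr_le0.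
  have e2 := hvP q hqK.
  have e3 : u1 * cX1 q + u2 * cX2 q = cX3 q.
    have : dotv v q = 0 by apply/eqP; rewrite eq_le e1 e2.
    rewrite dotv_v => /eqP; rewrite subr_eq0 => /eqP.
    done.
  exists (cX3 q); first exact: KX3.
  by rewrite -(EQ hT hqK e3).
move=> [a ha <-] g hg.
rewrite dotvZl dotvBr (dotvC _ v) hvw subr0 dotvC.
by rewrite mulr_ge0_le0 //; apply: hg.
Qed.

End S.

Theorem lemma3 (R : realType) (n : nat) (hn : (2 <= n)%N) (u1 u2 : R)
  (hu1 : 0 <= u1) (hu2 : 0 <= u2)
  (hv : boundary (polar_cone (@Kn R n)) (vvec n u1 u2)) :
  normal_cone (polar_cone (@Kn R n)) (vvec n u1 u2) =
  [set a *: wvec n u1 u2 | a in [set a : R | 0 <= a]].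
Proof. by apply: main. Qed.
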